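(* For every $\delta>0$ there exists $\eta>0$ such that the following holds. Let $G$ be an abelian group, $H$ a finite subgroup of $G$, and $T \subset H$ a non-empty subset with $|T|/|H| < \eta$. Then \[\left|\epsilon^*(H\setminus T) - \frac{|T|}{|H|}\right| \le \delta\,\frac{|T|}{|H|}.\] That is, the smallest $\epsilon$ for which $H\setminus T$ is a distributional $\epsilon$-approximate group equals $|T|/|H| + o(|T|/|H|)$ as $|T|/|H| \to 0$.
   Context: For a non-empty finite subset $A$ of an abelian group $G$, define $\epsilon^*(A) = 1 - \max_{U \subset G,\, |U|=|A|} \frac{|\{(a,b)\in A\times A : a+b \in U\}|}{|A|^2}$. Thus $A$ is a distributional $\epsilon$-approximate group (i.e. there exists $U\subset G$ with $|U|=|A|$ such that the proportion of pairs $(a,b)\in A\times A$ with $a+b\in U$ is at least $1-\epsilon$) if and only if $\epsilon \ge \epsilon^*(A)$. *)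

(* Defs.v *)
From HB Require Import structures.
From mathcomp Require Import all_boot all_order all_algebra finmap.
From Stdlib Require Import ClassicalEpsilon.
Set Implicit Arguments.
Unset Strict Implicit.
Unset Printing Implicit Defensive.
Import Order.TTheory GRing.Theory Num.Theory.
Local Open Scope fset_scope.
Local Open Scope ring_scope.

Definition decide (P : Prop) : bool :=
  if excluded_middle_informative P then true else false.

Definition is_fsubgroup (G : zmodType) (H : {fset G}) : Prop :=
  0 \in H /\ (forall x y, x \in H -> y \in H -> x - y \in H).

Definition pair_count (G : zmodType) (A U : {fset G}) : nat :=
  (\sum_(a <- A) \sum_(b <- A) nat_of_bool ((a + b)%R \in U))%N.

(* max over U \subset G with |U| = |A| of pair_count A U.
   All values lie in [0, |A|^2], so this is the max over attained values. *)
Definition max_pair_count (G : zmodType) (A : {fset G}) : nat :=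
  (\max_(k < (#|` A| ^ 2).+1 |
          decide (exists U : {fset G}, #|` U| = #|` A| /\ pair_count A U = k))
     (k : nat))%N.

Definition eps_star (R : realFieldType) (G : zmodType) (A : {fset G}) : R :=
  1 - (max_pair_count A)%:R / ((#|` A| ^ 2)%N)%:R.

(* Main.v *)
Require Import Defs.
From HB Require Import structures.
From mathcomp Require Import all_boot all_order all_algebra finmap.
From Stdlib Require Import ClassicalEpsilon.
From mathcomp Require Import zify.
Import Order.TTheory GRing.Theory Num.Theory.
From mathcomp Require Import ring lra.
Local Open Scope fset_scope.

Section Comb.
Variable G : zmodType.
Implicit Types H T U A : {fset G}.

Lemma sum_ind_count (s : seq G) (P : pred G) :
  (\sum_(a <- s) nat_of_bool (P a))%N = count P s.
Proof. by elim: s => [|x s IH]; rewrite ?big_nil ?big_cons ?IH. Qed.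

Lemma sum_const_seq (s : seq G) (c : nat) : (\sum_(a <- s) c)%N = (size s * c)%N.
Proof. by elim: s => [|x s IH]; rewrite ?big_nil ?big_cons ?IH ?mulSn. Qed.

Lemma shift_count H U b : is_fsubgroup H -> b \in H ->
  count (fun a => (a + b)%R \in U) H = count (mem U) H.
Proof.
move=> [H0 HB] bH.
have -> : count (fun a => (a + b)%R \in U) H = count (mem U) [seq (a + b)%R | a <- H].
  by rewrite count_map.
suff /permP P : perm_eq [seq (a + b)%R | a <- H] H by exact: P.
apply: uniq_perm.
- rewrite map_inj_uniq ?fset_uniq //; exact: addIr.
- exact: fset_uniq.
move=> x; apply/mapP/idP.
  move=> [a aH ->]. have := HB a (0 - b)%R aH (HB _ _ H0 bH).
  by rewrite GRing.sub0r GRing.opprK.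
move=> xH; exists (x - b)%R; first exact: HB.
by rewrite GRing.subrK.
Qed.

Lemma count_le_card H U : count (mem U) H <= #|` U|.
Proof.
rewrite -size_filter; apply: uniq_leq_size; first by rewrite filter_uniq ?fset_uniq.
by move=> x; rewrite mem_filter => /andP [].
Qed.

Lemma split_sum H T (F : G -> nat) : T `<=` H ->
  (\sum_(b <- H) F b = \sum_(b <- H `\` T) F b + \sum_(b <- T) F b)%N.
Proof.
move=> /fsubsetP sTH; rewrite -big_cat; apply: perm_big; apply: uniq_perm.
- exact: fset_uniq.
- rewrite cat_uniq !fset_uniq /= andbT; apply/hasPn => x xT.
  by rewrite in_fsetD xT.
move=> x; rewrite mem_cat in_fsetD.
case xT: (x \in T) => //=; last by rewrite orbF.
by rewrite sTH.
Qed.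

Lemma card_split H T : T `<=` H -> #|` H| = (#|` H `\` T| + #|` T|)%N.
Proof.
move=> sTH; have := split_sum _ _ (fun _ => 1%N) sTH.
by rewrite !sum1_size.
Qed.

Lemma pc_upper H T U : is_fsubgroup H -> T `<=` H ->
  #|` T| <= #|` H `\` T| -> #|` U| = #|` H `\` T| ->
  pair_count (H `\` T) U <= (#|` H `\` T| - #|` T|) * #|` H `\` T| + #|` T| * #|` T|.
Proof.
move=> sH sTH tk cU.
set A := H `\` T; set k := #|` A|; set t := #|` T|.
set m := count (mem U) H.
have mk : m <= k by rewrite /k /A -cU count_le_card.
have inner : forall a, a \in H ->
   (\sum_(b <- A) nat_of_bool ((a + b)%R \in U) + \sum_(b <- T) nat_of_bool ((a + b)%R \in U))%N = m.
  move=> a aH; rewrite -split_sum // sum_ind_count /m.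
  rewrite -(shift_count _ U _ sH aH); apply: eq_count => b; by rewrite GRing.addrC.
have inner2 : forall b, b \in H ->
   (\sum_(a <- A) nat_of_bool ((a + b)%R \in U) + \sum_(a <- T) nat_of_bool ((a + b)%R \in U))%N = m.
  by move=> b bH; rewrite -split_sum // sum_ind_count /m shift_count.
have HA : forall a, a \in A -> a \in H by move=> a; rewrite in_fsetD => /andP [].
have HT : forall a, a \in T -> a \in H by move=> a; move/fsubsetP: sTH; apply.
set X := (\sum_(a <- A) \sum_(b <- T) nat_of_bool ((a + b)%R \in U))%N.
set S := (\sum_(b <- T) \sum_(a <- T) nat_of_bool ((a + b)%R \in U))%N.
have e1 : (pair_count A U + X = k * m)%N.
  rewrite /pair_count /X -big_split /= -sum_const_seq.
  rewrite big_seq [in RHS]big_seq; apply: eq_bigr => a aA; exact: inner (HA _ aA).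
have e2 : (X + S = t * m)%N.
  rewrite /X exchange_big /S -big_split /= -sum_const_seq.
  rewrite big_seq [in RHS]big_seq; apply: eq_bigr => b bT; exact: inner2 (HT _ bT).
have eS : S <= t * t.
  rewrite /S -sum_const_seq big_seq [in X in _ <= X]big_seq; apply: leq_sum => b _.
  apply: leq_trans (_ : \sum_(a <- T) 1 <= _)%N; first by apply: leq_sum => a _; case: (_ \in _).
  by rewrite sum1_size.
have : (k - t) * m <= (k - t) * k by rewrite leq_mul2l mk orbT.
nia.
Qed.

Lemma pc_lower H T : is_fsubgroup H -> T `<=` H ->
  #|` H `\` T| * (#|` H `\` T| - #|` T|) <= pair_count (H `\` T) (H `\` T).
Proof.
move=> sH sTH.
set A := H `\` T; set k := #|` A|; set t := #|` T|.
rewrite /pair_count -sum_const_seq big_seq [in X in _ <= X]big_seq.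
apply: leq_sum => a aA.
have aH : a \in H by move: aA; rewrite in_fsetD => /andP [].
have e : (\sum_(b <- A) nat_of_bool ((a + b)%R \in A) + \sum_(b <- A) nat_of_bool ((a + b)%R \in T))%N = k.
  rewrite -big_split /= -[k]sum1_size big_seq [in RHS]big_seq; apply: eq_bigr => b bA.
  have bH : b \in H by move: bA; rewrite in_fsetD => /andP [].
  have abH : (a + b)%R \in H.
    case: sH => H0 HB; have := HB a (0 - b)%R aH (HB _ _ H0 bH).
    by rewrite GRing.sub0r GRing.opprK.
  by rewrite in_fsetD abH; case: (_ \in T).
have le : (\sum_(b <- A) nat_of_bool ((a + b)%R \in T) <= t)%N.
  apply: leq_trans (_ : \sum_(b <- H) nat_of_bool ((a + b)%R \in T) <= t)%N.
    by rewrite (split_sum _ _ _ sTH) leq_addr.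
  rewrite sum_ind_count.
  have -> : count (fun b => (a + b)%R \in T) H = count (mem T) H.
    rewrite -(shift_count _ T _ sH aH); apply: eq_count => b; by rewrite GRing.addrC.
  exact: count_le_card.
lia.
Qed.

Lemma pc_le_sq A U : pair_count A U <= #|` A| ^ 2.
Proof.
rewrite /pair_count expnS expn1 -sum_const_seq; apply: leq_sum => a _.
apply: leq_trans (_ : \sum_(b <- A) 1 <= _)%N; first by apply: leq_sum => b _; case: (_ \in _).
by rewrite sum1_size.
Qed.

Lemma decideT (P : Prop) : P -> decide P = true.
Proof. by rewrite /decide; case: excluded_middle_informative. Qed.
Lemma decideE (P : Prop) : decide P = true -> P.
Proof. by rewrite /decide; case: excluded_middle_informative. Qed.

Lemma max_ge A U : #|` U| = #|` A| -> pair_count A U <= max_pair_count A.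
Proof.
move=> cU; have lt : pair_count A U < (#|` A| ^ 2).+1 by rewrite ltnS pc_le_sq.
rewrite /max_pair_count.
apply: (@leq_bigmax_cond _ _ (fun k : 'I_ _ => (k : nat)) (Ordinal lt)).
by apply: decideT; exists U.
Qed.

Lemma max_le A B : (forall U, #|` U| = #|` A| -> pair_count A U <= B) ->
  max_pair_count A <= B.
Proof.
move=> hB; rewrite /max_pair_count; apply/bigmax_leqP => i /decideE [U [cU <-]].
exact: hB.
Qed.

End Comb.
Local Open Scope ring_scope.
Lemma real_part (R : realFieldType) (delta e u v : R) :
  0 < delta -> 0 <= u -> u <= 1 -> u <= delta -> u - u ^+ 2 <= e -> e <= u ->
  v * (1 + u) = u -> `| e - v | <= delta * v.
Proof.
move=> hd u0 u1 ud el eu hv.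
have v0 : 0 <= v.
  have : 0 < 1 + u by lra.
  move=> p; rewrite -(pmulr_lge0 _ p) hv //.
have e1 : u - v = u * v by nra.
rewrite ler_norml; apply/andP; split; nra.
Qed.

Lemma real_part2 (R : realFieldType) (delta : R) (n t k M : nat) :
  0 < delta -> (0 < k)%N -> (t <= k)%N -> (t%:R <= delta * k%:R) -> n = (k + t)%N ->
  (k * (k - t) <= M)%N -> (M <= (k - t) * k + t * t)%N ->
  `| 1 - M%:R / (k ^ 2)%N%:R - t%:R / n%:R | <= delta * (t%:R / n%:R).
Proof.
move=> hd k0 tk td -> ML MU.
have K0 : 0 < k%:R :> R by rewrite ltr0n.
set u := t%:R / k%:R : R.
have u0 : 0 <= u by rewrite divr_ge0.
have u1 : u <= 1 by rewrite ler_pdivrMr // mul1r ler_nat.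
have ud : u <= delta by rewrite ler_pdivrMr.
have hv : t%:R / (k + t)%N%:R * (1 + u) = u.
  rewrite /u natrD; field.
  have T0 : 0 <= t%:R :> R by rewrite ler0n.
  by apply/andP; split; rewrite gt_eqF //; lra.
apply: real_part hd u0 u1 ud _ _ hv.
- have : (k * (k - t))%:R <= (M%:R : R) by rewrite ler_nat.
  rewrite natrM natrB // => h.
  rewrite /u -subr_ge0.
  have -> : 1 - M%:R / (k ^ 2)%N%:R - (t%:R / k%:R - (t%:R / k%:R) ^+ 2)
     = ((k%:R - t%:R) * k%:R + t%:R * t%:R - M%:R) / (k%:R ^+ 2) :> R.
    by rewrite natrX; field; rewrite gt_eqF.
  apply: divr_ge0; last by rewrite exprn_ge0 ?ltW.
  rewrite subr_ge0; have : (M%:R : R) <= ((k - t) * k + t * t)%N%:R by rewrite ler_nat.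
  by rewrite natrD !natrM natrB.
- have : (k * (k - t))%:R <= (M%:R : R) by rewrite ler_nat.
  rewrite natrM natrB // => h.
  rewrite /u -subr_ge0.
  have -> : t%:R / k%:R - (1 - M%:R / (k ^ 2)%N%:R)
     = (M%:R - k%:R * (k%:R - t%:R)) / (k%:R ^+ 2) :> R.
    by rewrite natrX; field; rewrite gt_eqF.
  apply: divr_ge0; last by rewrite exprn_ge0 ?ltW.
  by rewrite subr_ge0.
Qed.

Theorem mainTheorem5 (R : realFieldType) (delta : R) (hdelta : 0 < delta) :
  exists eta : R, 0 < eta /\
    forall (G : zmodType) (H T : {fset G}),
      is_fsubgroup H -> T `<=` H -> T != fset0 ->
      (#|` T|%:R / #|` H|%:R : R) < eta ->
      `| eps_star R (H `\` T) - #|` T|%:R / #|` H|%:R |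
        <= delta * (#|` T|%:R / #|` H|%:R).
Proof.
have d1 : 0 < 1 + delta by lra.
exists (Num.min (2^-1) (delta / (1 + delta))); split.
  by rewrite lt_min; apply/andP; split; [rewrite invr_gt0 ltr0n | rewrite divr_gt0].
move=> G H T sH sTH Tne lt.
have cs := @card_split _ _ _ sTH.
have t0 : (0 < #|` T|)%N by rewrite cardfs_gt0.
have n0 : 0 < #|` H|%:R :> R by rewrite ltr0n cs; lia.
move: lt; rewrite lt_min => /andP [l1 l2].
rewrite ltr_pdivrMr // in l1.
rewrite ltr_pdivrMr // mulrAC ltr_pdivlMr // in l2.
rewrite cs natrD in l1 l2.
have tk : (#|` T| <= #|` H `\` T|)%N by rewrite -(ler_nat R); lra.
have td : #|` T|%:R <= delta * #|` H `\` T|%:R :> R by nra.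
have k0 : (0 < #|` H `\` T|)%N by lia.
rewrite /eps_star.
apply: (@real_part2 R delta _ _ _ (max_pair_count (H `\` T)) hdelta k0 tk td cs).
- have h1 := @pc_lower G H T sH sTH.
  have h2 := @max_ge G (H `\` T) (H `\` T) (erefl _).
  exact: (leq_trans h1 h2).
- exact: (@max_le G (H `\` T) _ (fun U cU => @pc_upper G H T U sH sTH tk cU)).
Qed.
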